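(* Let $\mathcal{V}$ be a (left) skew-monoidal category, $\mathcal{A}$ a category, and $\ast\colon\mathcal{V}\times\mathcal{A}\to\mathcal{A}$ and $\underline{\mathcal{A}}(-,-)\colon\mathcal{A}^{\mathrm{op}}\times\mathcal{A}\to\mathcal{V}$ functors. Given an isomorphism $\mathcal{A}(X\ast A,B)\cong\mathcal{V}(X,\underline{\mathcal{A}}(A,B))$ natural in $X,A,B$, there is a bijection between skew $\mathcal{V}$-actegory structures extending $(\mathcal{A},\ast)$ and skew $\mathcal{V}$-category structures extending $(\mathcal{A},\underline{\mathcal{A}}(-,-))$. Moreover, if $\mathcal{V}$ is monoidal closed, then there is a bijection between $\mathcal{V}$-actegory structures extending $(\mathcal{A},\ast)$ and tensored $\mathcal{V}$-category structures extending $(\mathcal{A},\underline{\mathcal{A}}(-,-))$.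
   Context: A (left) skew-monoidal category $(\mathcal{V},\otimes,I,a,l,r)$ is a category with a functor $\otimes$, an object $I$, and natural transformations (not necessarily invertible) $a\colon (X\otimes Y)\otimes Z\to X\otimes(Y\otimes Z)$, $l\colon I\otimes X\to X$, $r\colon X\to X\otimes I$, satisfying: $(1\otimes a)\circ a\circ(a\otimes 1)=a\circ a$; $l_{X\otimes Y}\circ a_{I,X,Y}=l_X\otimes 1_Y$; $(1_X\otimes l_Y)\circ a_{X,I,Y}\circ(r_X\otimes 1_Y)=1$; $a_{X,Y,I}\circ r_{X\otimes Y}=1_X\otimes r_Y$; $l_I\circ r_I=1_I$. It is monoidal closed if $a,l,r$ are invertible and each $-\otimes Y$ has a right adjoint $[Y,-]$. A skew $\mathcal{V}$-actegory structure extending $(\mathcal{A},\ast)$ consists of natural transformations (not necessarily invertible) $a\colon(X\otimes Y)\ast A\to X\ast(Y\ast A)$, $l\colon I\ast A\to A$ such that $(1_X\ast a_{Y,Z,A})\circ a_{X,Y\otimes Z,A}\circ(a_{X,Y,Z}\ast1_A)=a_{X,Y,Z\ast A}\circ a_{X\otimes Y,Z,A}$, $l_{X\ast A}\circ a_{I,X,A}=l_X\ast1_A$, and $(1_X\ast l_A)\circ a_{X,I,A}\circ(r_X\ast1_A)=1_{X\ast A}$. It is a $\mathcal{V}$-actegory structure if $a$ and $l$ are invertible. A skew $\mathcal{V}$-category structure extending $(\mathcal{A},\underline{\mathcal{A}}(-,-))$ consists of natural transformations $M\colon\underline{\mathcal{A}}(B,C)\otimes\underline{\mathcal{A}}(A,B)\to\underline{\mathcal{A}}(A,C)$,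 $j\colon I\to\underline{\mathcal{A}}(A,A)$ (natural with respect to morphisms of $\mathcal{A}$) with $M\circ(1\otimes M)\circ a=M\circ(M\otimes 1)$, $M\circ(j\otimes 1)=l$, $M\circ(1\otimes j)\circ r=1$. It is normal if each function $\mathcal{A}(A,B)\to\mathcal{V}(I,\underline{\mathcal{A}}(A,B))$, $f\mapsto\underline{\mathcal{A}}(A,f)\circ j_A$, is a bijection (so that it amounts to an ordinary $\mathcal{V}$-category with underlying category $\mathcal{A}$). For $\mathcal{V}$ monoidal closed, a tensored $\mathcal{V}$-category structure extending $(\mathcal{A},\underline{\mathcal{A}}(-,-))$ is a normal such structure for which, writing $\eta_{Y,A}\colon Y\to\underline{\mathcal{A}}(A,Y\ast A)$ for the morphism corresponding to $1_{Y\ast A}$ under the given isomorphism, each morphism $k\colon\underline{\mathcal{A}}(Y\ast A,C)\to[Y,\underline{\mathcal{A}}(A,C)]$ adjunct to $M\circ(1\otimes\eta_{Y,A})\colon\underline{\mathcal{A}}(Y\ast A,C)\otimes Y\to\underline{\mathcal{A}}(A,C)$ is invertible. *)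

(* Defs.v *)
(* Each structure is split into data + (Prop) laws so that the laws can be
   written with implicit arguments. *)

Record Cat := {
  ob :> Type;
  hom : ob -> ob -> Type;
  idm : forall A, hom A A;
  comp : forall A B C, hom B C -> hom A B -> hom A C;
  comp_id_l : forall A B (f : hom A B), comp A B B (idm B) f = f;
  comp_id_r : forall A B (f : hom A B), comp A A B f (idm A) = f;
  comp_assoc : forall A B C D (h : hom C D) (g : hom B C) (f : hom A B),
      comp A C D h (comp A B C g f) = comp A B D (comp B C D h g) f
}.
Arguments hom {c} A B.
Arguments idm {c} A.
Arguments comp {c A B C} g f.
Notation "g ∘ f" := (comp g f) (at level 40, left associativity).

Definition is_iso {C : Cat} {A B : C} (f : hom A B) : Prop :=
  exists g : hom B A, g ∘ f = idm A /\ f ∘ g = idm B.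

Record SkewMonData (C : Cat) := {
  tens : C -> C -> C;
  tensm : forall X X' Y Y' : C, hom X X' -> hom Y Y' -> hom (tens X Y) (tens X' Y');
  unit : C;
  sa : forall X Y Z : C, hom (tens (tens X Y) Z) (tens X (tens Y Z));
  sl : forall X : C, hom (tens unit X) X;
  sr : forall X : C, hom X (tens X unit)
}.
Arguments tens {C} _ X Y.
Arguments tensm {C} _ {X X' Y Y'} f g.
Arguments unit {C} _.
Arguments sa {C} _ X Y Z.
Arguments sl {C} _ X.
Arguments sr {C} _ X.

Record SkewMonLaws (C : Cat) (d : SkewMonData C) : Prop := {
  tensm_id : forall X Y : C, tensm d (idm X) (idm Y) = idm (tens d X Y);
  tensm_comp : forall (X X' X'' Y Y' Y'' : C) (f : hom X X') (f' : hom X' X'')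
                      (g : hom Y Y') (g' : hom Y' Y''),
      tensm d (f' ∘ f) (g' ∘ g) = tensm d f' g' ∘ tensm d f g;
  sa_nat : forall (X X' Y Y' Z Z' : C) (f : hom X X') (g : hom Y Y') (h : hom Z Z'),
      tensm d f (tensm d g h) ∘ sa d X Y Z = sa d X' Y' Z' ∘ tensm d (tensm d f g) h;
  sl_nat : forall (X X' : C) (f : hom X X'),
      f ∘ sl d X = sl d X' ∘ tensm d (idm (unit d)) f;
  sr_nat : forall (X X' : C) (f : hom X X'),
      tensm d f (idm (unit d)) ∘ sr d X = sr d X' ∘ f;
  sm_pentagon : forall W X Y Z : C,
      tensm d (idm W) (sa d X Y Z) ∘ sa d W (tens d X Y) Z ∘ tensm d (sa d W X Y) (idm Z)
      = sa d W X (tens d Y Z) ∘ sa d (tens d W X) Y Z;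
  sm_lax1 : forall X Y : C,
      sl d (tens d X Y) ∘ sa d (unit d) X Y = tensm d (sl d X) (idm Y);
  sm_lax2 : forall X Y : C,
      tensm d (idm X) (sl d Y) ∘ sa d X (unit d) Y ∘ tensm d (sr d X) (idm Y)
      = idm (tens d X Y);
  sm_lax3 : forall X Y : C,
      sa d X Y (unit d) ∘ sr d (tens d X Y) = tensm d (idm X) (sr d Y);
  sm_lax4 : sl d (unit d) ∘ sr d (unit d) = idm (unit d)
}.

Record SkewMonCat := {
  smcat :> Cat;
  smdata :> SkewMonData smcat;
  smlaws : SkewMonLaws smcat smdata
}.

Definition is_monoidal (V : SkewMonCat) : Prop :=
  (forall X Y Z : V, is_iso (sa V X Y Z)) /\
  (forall X : V, is_iso (sl V X)) /\ (forall X : V, is_iso (sr V X)).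

(* A right adjoint [Y,-] to each (- ⊗ Y), presented by counits with the
   couniversal property (equivalent to a right adjoint). *)
Record ClosedStr (V : SkewMonCat) := {
  ihom : V -> V -> V;
  ev : forall Y W : V, hom (tens V (ihom Y W) Y) W;
  ev_univ : forall (Y W Z : V) (f : hom (tens V Z Y) W),
      exists g : hom Z (ihom Y W),
        ev Y W ∘ tensm V g (idm Y) = f /\
        forall g' : hom Z (ihom Y W), ev Y W ∘ tensm V g' (idm Y) = f -> g' = g
}.
Arguments ihom {V} _ Y W.
Arguments ev {V} _ Y W.

Record ActData (V : SkewMonCat) (A : Cat) := {
  act : V -> A -> A;
  actm : forall (X X' : V) (B B' : A), hom X X' -> hom B B' -> hom (act X B) (act X' B')
}.
Arguments act {V A} _ X B.
Arguments actm {V A} _ {X X' B B'} f g.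

Record ActFunLaws (V : SkewMonCat) (A : Cat) (a : ActData V A) : Prop := {
  actm_id : forall (X : V) (B : A), actm a (idm X) (idm B) = idm (act a X B);
  actm_comp : forall (X X' X'' : V) (B B' B'' : A) (f : hom X X') (f' : hom X' X'')
                     (g : hom B B') (g' : hom B' B''),
      actm a (f' ∘ f) (g' ∘ g) = actm a f' g' ∘ actm a f g
}.

Record ActFun (V : SkewMonCat) (A : Cat) := {
  actdata :> ActData V A;
  actlaws : ActFunLaws V A actdata
}.

Record HomData (V : SkewMonCat) (A : Cat) := {
  ehom : A -> A -> V;
  ehomm : forall A0 A' B B' : A, hom A' A0 -> hom B B' -> hom (ehom A0 B) (ehom A' B')
}.
Arguments ehom {V A} _ A0 B.
Arguments ehomm {V A} _ {A0 A' B B'} a b.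

Record HomFunLaws (V : SkewMonCat) (A : Cat) (h : HomData V A) : Prop := {
  ehomm_id : forall A0 B : A, ehomm h (idm A0) (idm B) = idm (ehom h A0 B);
  ehomm_comp : forall (A0 A' A'' B B' B'' : A) (a : hom A' A0) (a' : hom A'' A')
                      (b : hom B B') (b' : hom B' B''),
      ehomm h (a ∘ a') (b' ∘ b) = ehomm h a' b' ∘ ehomm h a b
}.

Record HomFun (V : SkewMonCat) (A : Cat) := {
  homdata :> HomData V A;
  homlaws : HomFunLaws V A homdata
}.

Record NatHomIso (V : SkewMonCat) (A : Cat) (ac : ActFun V A) (H : HomFun V A) := {
  phi : forall (X : V) (A0 B : A), hom (act ac X A0) B -> hom X (ehom H A0 B);
  phi_inv : forall (X : V) (A0 B : A), hom X (ehom H A0 B) -> hom (act ac X A0) B;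
  phi_inv_phi : forall X A0 B f, phi_inv X A0 B (phi X A0 B f) = f;
  phi_phi_inv : forall X A0 B g, phi X A0 B (phi_inv X A0 B g) = g;
  phi_natX : forall (X X' : V) (A0 B : A) (x : hom X' X) (f : hom (act ac X A0) B),
      phi X' A0 B (f ∘ actm ac x (idm A0)) = phi X A0 B f ∘ x;
  phi_natA : forall (X : V) (A0 A' B : A) (a : hom A' A0) (f : hom (act ac X A0) B),
      phi X A' B (f ∘ actm ac (idm X) a) = ehomm H a (idm B) ∘ phi X A0 B f;
  phi_natB : forall (X : V) (A0 B B' : A) (b : hom B B') (f : hom (act ac X A0) B),
      phi X A0 B' (b ∘ f) = ehomm H (idm A0) b ∘ phi X A0 B f
}.
Arguments NatHomIso {V A} ac H.
Arguments phi {V A ac H} _ X A0 B f.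

Record SkewActData (V : SkewMonCat) (A : Cat) (ac : ActFun V A) := {
  aa : forall (X Y : V) (B : A), hom (act ac (tens V X Y) B) (act ac X (act ac Y B));
  al : forall B : A, hom (act ac (unit V) B) B
}.
Arguments SkewActData {V A} ac.
Arguments aa {V A ac} _ X Y B.
Arguments al {V A ac} _ B.

Record SkewActLaws (V : SkewMonCat) (A : Cat) (ac : ActFun V A) (s : SkewActData ac)
  : Prop := {
  aa_nat : forall (X X' Y Y' : V) (B B' : A) (x : hom X X') (y : hom Y Y') (b : hom B B'),
      actm ac x (actm ac y b) ∘ aa s X Y B = aa s X' Y' B' ∘ actm ac (tensm V x y) b;
  al_nat : forall (B B' : A) (b : hom B B'),
      b ∘ al s B = al s B' ∘ actm ac (idm (unit V)) b;
  act_pentagon : forall (X Y Z : V) (B : A),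
      actm ac (idm X) (aa s Y Z B) ∘ aa s X (tens V Y Z) B ∘ actm ac (sa V X Y Z) (idm B)
      = aa s X Y (act ac Z B) ∘ aa s (tens V X Y) Z B;
  act_lax1 : forall (X : V) (B : A),
      al s (act ac X B) ∘ aa s (unit V) X B = actm ac (sl V X) (idm B);
  act_lax2 : forall (X : V) (B : A),
      actm ac (idm X) (al s B) ∘ aa s X (unit V) B ∘ actm ac (sr V X) (idm B)
      = idm (act ac X B)
}.

Record SkewActegory (V : SkewMonCat) (A : Cat) (ac : ActFun V A) := {
  sadata :> SkewActData ac;
  salaws : SkewActLaws V A ac sadata
}.
Arguments SkewActegory {V A} ac.

Definition is_actegory {V : SkewMonCat} {A : Cat} {ac : ActFun V A}
  (s : SkewActegory ac) : Prop :=
  (forall (X Y : V) (B : A), is_iso (aa s X Y B)) /\ (forall B : A, is_iso (al s B)).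

Record SkewVCatData (V : SkewMonCat) (A : Cat) (H : HomFun V A) := {
  vM : forall B C D : A, hom (tens V (ehom H C D) (ehom H B C)) (ehom H B D);
  vj : forall B : A, hom (unit V) (ehom H B B)
}.
Arguments SkewVCatData {V A} H.
Arguments vM {V A H} _ B C D.
Arguments vj {V A H} _ B.

Record SkewVCatLaws (V : SkewMonCat) (A : Cat) (H : HomFun V A) (s : SkewVCatData H)
  : Prop := {
  vM_nat : forall (B B' C D D' : A) (b : hom B' B) (d : hom D D'),
      ehomm H b d ∘ vM s B C D
      = vM s B' C D' ∘ tensm V (ehomm H (idm C) d) (ehomm H b (idm C));
  vM_dinat : forall (B C C' D : A) (c : hom C C'),
      vM s B C D ∘ tensm V (ehomm H c (idm D)) (idm (ehom H B C))
      = vM s B C' D ∘ tensm V (idm (ehom H C' D)) (ehomm H (idm B) c);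
  vj_dinat : forall (B B' : A) (b : hom B' B),
      ehomm H b (idm B) ∘ vj s B = ehomm H (idm B') b ∘ vj s B';
  vassoc : forall B C D E : A,
      vM s B D E ∘ tensm V (idm (ehom H D E)) (vM s B C D)
        ∘ sa V (ehom H D E) (ehom H C D) (ehom H B C)
      = vM s B C E ∘ tensm V (vM s C D E) (idm (ehom H B C));
  vunit_l : forall B C : A,
      vM s B C C ∘ tensm V (vj s C) (idm (ehom H B C)) = sl V (ehom H B C);
  vunit_r : forall B C : A,
      vM s B B C ∘ tensm V (idm (ehom H B C)) (vj s B) ∘ sr V (ehom H B C)
      = idm (ehom H B C)
}.

Record SkewVCat (V : SkewMonCat) (A : Cat) (H : HomFun V A) := {
  svdata :> SkewVCatData H;
  svlaws : SkewVCatLaws V A H svdata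
}.
Arguments SkewVCat {V A} H.

Definition bijective {X Y : Type} (f : X -> Y) : Prop :=
  (forall x x', f x = f x' -> x = x') /\ (forall y, exists x, f x = y).

Definition is_normal {V : SkewMonCat} {A : Cat} {H : HomFun V A}
  (s : SkewVCat H) : Prop :=
  forall B C : A, bijective (fun f : hom B C => ehomm H (idm B) f ∘ vj s B).

Definition eta_unit {V : SkewMonCat} {A : Cat} {ac : ActFun V A} {H : HomFun V A}
  (n : NatHomIso ac H) (Y : V) (B : A) : hom Y (ehom H B (act ac Y B)) :=
  phi n Y B (act ac Y B) (idm (act ac Y B)).

Definition is_tensored {V : SkewMonCat} {A : Cat} {ac : ActFun V A} {H : HomFun V A}
  (n : NatHomIso ac H) (cl : ClosedStr V) (s : SkewVCat H) : Prop :=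
  is_normal s /\
  forall (Y : V) (B C : A) (k : hom (ehom H (act ac Y B) C) (ihom cl Y (ehom H B C))),
    ev cl Y (ehom H B C) ∘ tensm V k (idm Y)
      = vM s B (act ac Y B) C ∘ tensm V (idm (ehom H (act ac Y B) C)) (eta_unit n Y B) ->
    is_iso k.

(* Main.v *)
Require Import Defs.

Lemma idl {C : Cat} {a b : C} (f : hom a b) : idm b ∘ f = f.
Proof. apply comp_id_l. Qed.
Lemma idr {C : Cat} {a b : C} (f : hom a b) : f ∘ idm a = f.
Proof. apply comp_id_r. Qed.
Lemma assoc {C : Cat} {a b c d : C} (h : hom c d) (g : hom b c) (f : hom a b) :
  h ∘ (g ∘ f) = h ∘ g ∘ f.
Proof. apply comp_assoc. Qed.

Section Core.
Variable V : SkewMonCat.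
Variable A : Cat.
Variable ac : ActFun V A.
Variable H : HomFun V A.
Variable n : NatHomIso ac H.

Local Notation ph f := (phi n _ _ _ f).
Local Notation ps g := (phi_inv _ _ _ _ n _ _ _ g).
Local Notation I := (unit V).

Lemma tid (X Y : V) : tensm V (idm X) (idm Y) = idm (tens V X Y).
Proof. apply (tensm_id _ _ (smlaws V)). Qed.
Lemma tcomp (X X' X'' Y Y' Y'' : V) (f : hom X X') (f' : hom X' X'') (g : hom Y Y') (g' : hom Y' Y'') :
  tensm V (f' ∘ f) (g' ∘ g) = tensm V f' g' ∘ tensm V f g.
Proof. apply (tensm_comp _ _ (smlaws V)). Qed.
Lemma aid (X : V) (B : A) : actm ac (idm X) (idm B) = idm (act ac X B).
Proof. apply (actm_id _ _ _ (actlaws _ _ ac)). Qed.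
Lemma acomp (X X' X'' : V) (B B' B'' : A) (f : hom X X') (f' : hom X' X'') (g : hom B B') (g' : hom B' B'') :
  actm ac (f' ∘ f) (g' ∘ g) = actm ac f' g' ∘ actm ac f g.
Proof. apply (actm_comp _ _ _ (actlaws _ _ ac)). Qed.
Lemma hid (B C : A) : ehomm H (idm B) (idm C) = idm (ehom H B C).
Proof. apply (ehomm_id _ _ _ (homlaws _ _ H)). Qed.
Lemma hcomp (A0 A' A'' B B' B'' : A) (a : hom A' A0) (a' : hom A'' A') (b : hom B B') (b' : hom B' B'') :
  ehomm H (a ∘ a') (b' ∘ b) = ehomm H a' b' ∘ ehomm H a b.
Proof. apply (ehomm_comp _ _ _ (homlaws _ _ H)). Qed.

Lemma tsplit1 {X X' Y Y' : V} (f : hom X X') (g : hom Y Y') :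
  tensm V f g = tensm V f (idm Y') ∘ tensm V (idm X) g.
Proof. rewrite <- tcomp, idl, idr. reflexivity. Qed.
Lemma tsplit2 {X X' Y Y' : V} (f : hom X X') (g : hom Y Y') :
  tensm V f g = tensm V (idm X') g ∘ tensm V f (idm Y).
Proof. rewrite <- tcomp, idl, idr. reflexivity. Qed.
Lemma asplit1 {X X' : V} {B B' : A} (f : hom X X') (g : hom B B') :
  actm ac f g = actm ac f (idm B') ∘ actm ac (idm X) g.
Proof. rewrite <- acomp, idl, idr. reflexivity. Qed.
Lemma asplit2 {X X' : V} {B B' : A} (f : hom X X') (g : hom B B') :
  actm ac f g = actm ac (idm X') g ∘ actm ac f (idm B).
Proof. rewrite <- acomp, idl, idr. reflexivity. Qed.
Lemma hsplit {B B' C C' : A} (b : hom B' B) (c : hom C C') :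
  ehomm H b c = ehomm H b (idm C') ∘ ehomm H (idm B) c.
Proof. rewrite <- hcomp, !idl. reflexivity. Qed.

Lemma ph_inj {X : V} {B C : A} (f g : hom (act ac X B) C) : ph f = ph g -> f = g.
Proof. intro E. rewrite <- (phi_inv_phi _ _ _ _ n _ _ _ f), E. apply phi_inv_phi. Qed.
Lemma ps_ph {X : V} {B C : A} (f : hom (act ac X B) C) : ps (ph f) = f.
Proof. apply phi_inv_phi. Qed.
Lemma ph_ps {X : V} {B C : A} (g : hom X (ehom H B C)) : ph (ps g) = g.
Proof. apply phi_phi_inv. Qed.
Lemma ph_natX {X X' : V} {B C : A} (x : hom X' X) (f : hom (act ac X B) C) :
  ph (f ∘ actm ac x (idm B)) = ph f ∘ x.
Proof. apply phi_natX. Qed.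
Lemma ph_natA {X : V} {B B' C : A} (a : hom B' B) (f : hom (act ac X B) C) :
  ph (f ∘ actm ac (idm X) a) = ehomm H a (idm C) ∘ ph f.
Proof. apply phi_natA. Qed.
Lemma ph_natB {X : V} {B C C' : A} (b : hom C C') (f : hom (act ac X B) C) :
  ph (b ∘ f) = ehomm H (idm B) b ∘ ph f.
Proof. apply phi_natB. Qed.
Lemma ps_natX {X X' : V} {B C : A} (x : hom X' X) (u : hom X (ehom H B C)) :
  ps (u ∘ x) = ps u ∘ actm ac x (idm B).
Proof. apply ph_inj. rewrite ph_natX, !ph_ps. reflexivity. Qed.
Lemma ps_natA {X : V} {B B' C : A} (a : hom B' B) (u : hom X (ehom H B C)) :
  ps (ehomm H a (idm C) ∘ u) = ps u ∘ actm ac (idm X) a.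
Proof. apply ph_inj. rewrite ph_natA, !ph_ps. reflexivity. Qed.
Lemma ps_natB {X : V} {B C C' : A} (b : hom C C') (u : hom X (ehom H B C)) :
  ps (ehomm H (idm B) b ∘ u) = b ∘ ps u.
Proof. apply ph_inj. rewrite ph_natB, !ph_ps. reflexivity. Qed.

Definition evA (B C : A) : hom (act ac (ehom H B C) B) C := ps (idm (ehom H B C)).
Definition eta (Y : V) (B : A) : hom Y (ehom H B (act ac Y B)) := ph (idm (act ac Y B)).

Lemma ps_ev {X : V} {B C : A} (u : hom X (ehom H B C)) : ps u = evA B C ∘ actm ac u (idm B).
Proof. unfold evA. rewrite <- ps_natX, idl. reflexivity. Qed.
Lemma ps_eta (Y : V) (B : A) : ps (eta Y B) = idm _.
Proof. apply ps_ph. Qed.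
Lemma ph_ev (B C : A) : ph (evA B C) = idm _.
Proof. apply ph_ps. Qed.
Lemma ph_eta {X : V} {B C : A} (f : hom (act ac X B) C) : ph f = ehomm H (idm B) f ∘ eta X B.
Proof. unfold eta. rewrite <- ph_natB, idr. reflexivity. Qed.
Lemma ph_etaX {X X' : V} {B : A} (x : hom X X') : ph (actm ac x (idm B)) = eta X' B ∘ x.
Proof. unfold eta. rewrite <- ph_natX, idl. reflexivity. Qed.


Ltac lassoc := repeat rewrite assoc.

Lemma wh2 {C : Cat} {a b c z : C} {p : hom b c} {q : hom a b} {R : hom a c}
  (E : p ∘ q = R) (h : hom c z) : h ∘ p ∘ q = h ∘ R.
Proof. rewrite <- assoc, E. reflexivity. Qed.
Lemma wh3 {C : Cat} {a b c d z : C} {p : hom c d} {q : hom b c} {r : hom a b} {R : hom a d}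
  (E : p ∘ q ∘ r = R) (h : hom d z) : h ∘ p ∘ q ∘ r = h ∘ R.
Proof. rewrite <- E. lassoc. reflexivity. Qed.

Ltac rw_ E := first [rewrite E | rewrite (wh2 E) | rewrite (wh3 E)]; lassoc.
Tactic Notation "rw" open_constr(E) := rw_ E.

Lemma ps_id (B C : A) : ps (idm (ehom H B C)) = evA B C.
Proof. reflexivity. Qed.
Lemma ps_h1 {B C C' : A} (c : hom C C') : ps (ehomm H (idm B) c) = c ∘ evA B C.
Proof. rewrite <- (idr (ehomm H (idm B) c)), ps_natB. reflexivity. Qed.
Lemma ps_h2 {B B' C : A} (b : hom B' B) : ps (ehomm H b (idm C)) = evA B C ∘ actm ac (idm _) b.
Proof. rewrite <- (idr (ehomm H b (idm C))), ps_natA. reflexivity. Qed.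
Lemma acomp_r {X : V} {B B' B'' : A} (g : hom B B') (g' : hom B' B'') :
  actm ac (idm X) (g' ∘ g) = actm ac (idm X) g' ∘ actm ac (idm X) g.
Proof. rewrite <- acomp, idl. reflexivity. Qed.
Lemma tl {X X' Y Y' Y'' : V} (f : hom X X') (g : hom Y' Y'') (h : hom Y Y') :
  tensm V f (g ∘ h) = tensm V (idm X') g ∘ tensm V f h.
Proof. rewrite <- tcomp, idl. reflexivity. Qed.
Lemma tr {X X' X'' Y Y' : V} (g : hom X' X'') (h : hom X X') (f : hom Y Y') :
  tensm V (g ∘ h) f = tensm V g (idm Y') ∘ tensm V h f.
Proof. rewrite <- tcomp, idl. reflexivity. Qed.

Definition Fdata (s : SkewActData ac) : SkewVCatData H :=
  {| vM := fun B C D => ph (evA C D ∘ actm ac (idm _) (evA B C) ∘ aa s _ _ B);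
     vj := fun B => ph (al s B) |}.
Definition Gdata (t : SkewVCatData H) : SkewActData ac :=
  {| aa := fun X Y B => ps (vM t B _ _ ∘ tensm V (eta X _) (eta Y B));
     al := fun B => ps (vj t B) |}.

Lemma RF (s : SkewActData ac) (LA : SkewActLaws V A ac s) :
  forall (X Y : V) (B C D : A) (u : hom X (ehom H C D)) (v : hom Y (ehom H B C)),
  vM (Fdata s) B C D ∘ tensm V u v = ph (ps u ∘ actm ac (idm X) (ps v) ∘ aa s X Y B).
Proof.
  intros. cbn [vM Fdata]. rewrite <- ph_natX. f_equal.
  rewrite <- (assoc _ (aa s _ _ B)), <- (aa_nat _ _ _ _ LA). lassoc.
  rewrite <- (assoc _ (actm ac (idm _) (evA _ _))), <- acomp, idl, <- ps_ev, (asplit1 u (ps v)).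
  lassoc. rewrite <- ps_ev. reflexivity.
Qed.

Lemma RG (t : SkewVCatData H) (LV : SkewVCatLaws V A H t) :
  forall (X Y : V) (B C D : A) (u : hom X (ehom H C D)) (v : hom Y (ehom H B C)),
  vM t B C D ∘ tensm V u v = ph (ps u ∘ actm ac (idm X) (ps v) ∘ aa (Gdata t) X Y B).
Proof.
  intros. cbn [aa Gdata]. symmetry.
  rewrite ph_natB, ph_ps, assoc, (vM_nat _ _ _ _ LV), hid, <- assoc, <- tcomp, idl, <- ph_eta.
  rewrite ph_natA, ph_ps, tr, assoc, (vM_dinat _ _ _ _ LV), <- assoc, <- tcomp, idl, <- ph_eta, ph_ps.
  reflexivity.
Qed.

Variable sa : SkewActData ac.
Variable sv : SkewVCatData H.
Hypothesis HR : forall (X Y : V) (B C D : A) (u : hom X (ehom H C D)) (v : hom Y (ehom H B C)),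
  vM sv B C D ∘ tensm V u v = ph (ps u ∘ actm ac (idm X) (ps v) ∘ aa sa X Y B).
Hypothesis HL : forall B, vj sv B = ph (al sa B).

Lemma HR' {X Y : V} {B C D : A} (f : hom (act ac X C) D) (g : hom (act ac Y B) C) :
  ph (f ∘ actm ac (idm X) g ∘ aa sa X Y B) = vM sv B C D ∘ tensm V (ph f) (ph g).
Proof. rewrite HR, !ps_ph. reflexivity. Qed.
Lemma HR0 {X Y : V} {B C : A} (g : hom (act ac Y B) C) :
  ph (actm ac (idm X) g ∘ aa sa X Y B) = vM sv B C _ ∘ tensm V (eta X C) (ph g).
Proof. unfold eta. rewrite <- HR', idl. reflexivity. Qed.
Lemma HR1 {X Y : V} {B D : A} (f : hom (act ac X (act ac Y B)) D) :
  ph (f ∘ aa sa X Y B) = vM sv B _ D ∘ tensm V (ph f) (eta Y B).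
Proof. unfold eta. rewrite <- HR', aid, idr. reflexivity. Qed.
Lemma Ha (X Y : V) (B : A) :
  ph (aa sa X Y B) = vM sv B _ _ ∘ tensm V (eta X _) (eta Y B).
Proof. rewrite <- (idl (aa sa X Y B)). rewrite HR1. reflexivity. Qed.
Lemma HM (B C D : A) :
  vM sv B C D = ph (evA C D ∘ actm ac (idm _) (evA B C) ∘ aa sa _ _ B).
Proof. rewrite <- (idr (vM sv B C D)), <- tid, HR. reflexivity. Qed.

Lemma F_laws : SkewActLaws V A ac sa -> SkewVCatLaws V A H sv.
Proof.
  intro LA.
  assert (En : forall (X Y : V) (B B' : A) (b : hom B B'),
    aa sa X Y B' ∘ actm ac (idm _) b = actm ac (idm X) (actm ac (idm Y) b) ∘ aa sa X Y B).
  { intros. rewrite (aa_nat _ _ _ _ LA), tid. reflexivity. }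
  constructor.
  - intros. rewrite HR, ps_h1, ps_h2, HM, hsplit, <- assoc, <- ph_natB, <- ph_natA.
    f_equal. lassoc. rewrite acomp_r. lassoc. rw (En _ _ _ _ _). reflexivity.
  - intros. rewrite !HR, ps_h1, ps_h2, !ps_id. f_equal. lassoc. rewrite acomp_r. lassoc. reflexivity.
  - intros. rewrite !HL, <- ph_natA, <- ph_natB. f_equal. symmetry. apply (al_nat _ _ _ _ LA).
  - intros. rewrite !HR, !ps_id, !HM, !ps_ph, <- ph_natX. f_equal.
    rewrite !acomp_r. lassoc. rw (act_pentagon _ _ _ _ LA _ _ _ _). rw (eq_sym (En _ _ _ _ _)). reflexivity.
  - intros. rewrite HR, HL, ps_ph, ps_id.
    rewrite <- (al_nat _ _ _ _ LA). lassoc. rw (act_lax1 _ _ _ _ LA _ _).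
    rewrite ph_natX, ph_ev, idl. reflexivity.
  - intros. rewrite HR, HL, ps_ph, ps_id, <- ph_natX. lassoc. rw (act_lax2 _ _ _ _ LA _ _).
    rewrite idr, ph_ev. reflexivity.
Qed.


Lemma G_laws : SkewVCatLaws V A H sv -> SkewActLaws V A ac sa.
Proof.
  intro LV. constructor.
  - intros X X' Y Y' B B' x y b. apply ph_inj.
    rewrite (asplit1 x (actm ac y b)), HR', ph_etaX, (asplit1 y b), ph_natA, ph_etaX.
    rewrite (asplit1 (tensm V x y) b), (assoc (aa sa X' Y' B')), ph_natA, ph_natX, Ha.
    lassoc. rewrite (vM_nat _ _ _ _ LV), hid.
    rewrite <- !assoc, <- !tcomp, idl. reflexivity.
  - intros B B' b. apply ph_inj. rewrite ph_natB, ph_natA, <- !HL.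
    symmetry. apply (vj_dinat _ _ _ _ LV).
  - intros X Y Z B. apply ph_inj.
    rewrite ph_natX, HR0, Ha, HR1, Ha, tl, tr. lassoc.
    rw (sa_nat _ _ (smlaws V) _ _ _ _ _ _ _ _ _).
    rw (vassoc _ _ _ _ LV _ _ _ _). reflexivity.
  - intros X B. apply ph_inj.
    rewrite <- (idr (al sa (act ac X B))), <- (aid (unit V) (act ac X B)), HR', <- HL, ph_etaX.
    rewrite tsplit1. lassoc. rw (vunit_l _ _ _ _ LV _ _).
    rewrite <- (sl_nat _ _ (smlaws V)). reflexivity.
  - intros X B. apply ph_inj.
    rewrite ph_natX, HR0, <- HL, tsplit2. lassoc.
    rw (sr_nat _ _ (smlaws V) _ _ _).
    rw (vunit_r _ _ _ _ LV _ _). rewrite idl. reflexivity.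
Qed.


Lemma normal_iff : (forall B, is_iso (al sa B)) <->
  (forall B C : A, bijective (fun f : hom B C => ehomm H (idm B) f ∘ vj sv B)).
Proof.
  assert (E : forall (B C : A) (f : hom B C), ehomm H (idm B) f ∘ vj sv B = ph (f ∘ al sa B)).
  { intros. rewrite HL, ph_natB. reflexivity. }
  split.
  - intros Hi B C. destruct (Hi B) as [g [Hg1 Hg2]]. split.
    + intros f f' Ef. rewrite !E in Ef. apply ph_inj in Ef.
      rewrite <- (idr f), <- (idr f'), <- Hg2, !assoc, Ef. reflexivity.
    + intro y. exists (ps y ∘ g). rewrite E, <- assoc, Hg1, idr, ph_ps. reflexivity.
  - intros Hb B. destruct (proj2 (Hb B (act ac (unit V) B)) (eta (unit V) B)) as [f Hf].
    rewrite E in Hf. unfold eta in Hf. apply ph_inj in Hf.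
    exists f. split; [exact Hf|].
    apply (proj1 (Hb B B)). rewrite !E. f_equal. rewrite <- assoc, Hf, idl, idr. reflexivity.
Qed.

Lemma Key (LA : SkewActLaws V A ac sa) (Y : V) (B C : A) :
  vM sv B (act ac Y B) C ∘ tensm V (idm _) (eta_unit n Y B) = ph (evA _ _ ∘ aa sa _ Y B).
Proof. rewrite HR. unfold eta_unit. rewrite ps_ph, ps_id, aid, idr. reflexivity. Qed.

Lemma cancel_r {C0 : Cat} {a b c : C0} (p : hom a b) (q : hom b a) (Hq : p ∘ q = idm b)
  (f g : hom b c) : f ∘ p = g ∘ p -> f = g.
Proof. intro E. rewrite <- (idr f), <- (idr g), <- Hq, !assoc, E. reflexivity. Qed.

Lemma K1 (LA : SkewActLaws V A ac sa) (cl : ClosedStr V) (Y : V) (B C : A)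
  (k : hom (ehom H (act ac Y B) C) (ihom cl Y (ehom H B C)))
  (Hk : ev cl Y (ehom H B C) ∘ tensm V k (idm Y) = ph (evA _ _ ∘ aa sa _ Y B))
  (X : V) (v : hom X (ehom H (act ac Y B) C)) :
  ev cl Y (ehom H B C) ∘ tensm V (k ∘ v) (idm Y) = ph (ps v ∘ aa sa X Y B).
Proof.
  rewrite tr, assoc, Hk, <- ph_natX, <- assoc, <- (aa_nat _ _ _ _ LA), aid, assoc, <- ps_ev. reflexivity.
Qed.

Lemma tens_iff (LA : SkewActLaws V A ac sa) (cl : ClosedStr V) :
  (forall (X Y : V) (B : A), is_iso (aa sa X Y B)) <->
  (forall (Y : V) (B C : A) (k : hom (ehom H (act ac Y B) C) (ihom cl Y (ehom H B C))),
    ev cl Y (ehom H B C) ∘ tensm V k (idm Y)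
      = vM sv B (act ac Y B) C ∘ tensm V (idm (ehom H (act ac Y B) C)) (eta_unit n Y B) ->
    is_iso k).
Proof.
  split.
  - intros Hi Y B C k Hk. rewrite Key in Hk by exact LA.
    destruct (Hi (ihom cl Y (ehom H B C)) Y B) as [ai [Hai1 Hai2]].
    destruct (Hi (ehom H (act ac Y B) C) Y B) as [a0i [Ha01 Ha02]].
    exists (ph (ps (ev cl Y (ehom H B C)) ∘ ai)). split.
    + rewrite <- ph_natX, <- (ph_ev (act ac Y B) C). f_equal.
      apply (cancel_r _ _ Ha02).
      rewrite <- (assoc _ (actm ac k _) _), <- (aid Y B), (aa_nat _ _ _ _ LA). lassoc.
      rw Hai1. rewrite idr, <- ps_natX, Hk, ps_ph. reflexivity.
    + destruct (ev_univ V cl Y (ehom H B C) (ihom cl Y (ehom H B C)) (ev cl Y (ehom H B C))) as [g [Hg Hu]].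
      transitivity g; [|symmetry]; apply Hu.
      * rewrite K1 by assumption. rewrite ps_ph, <- assoc, Hai1, idr. apply ph_ps.
      * rewrite tid, idr. reflexivity.
  - intros Ht X Y B.
    assert (Kex : forall C, exists k k', k' ∘ k = idm _ /\ k ∘ k' = idm _ /\
       ev cl Y (ehom H B C) ∘ tensm V k (idm Y) = ph (evA _ _ ∘ aa sa _ Y B)).
    { intro C. destruct (ev_univ V cl Y (ehom H B C) (ehom H (act ac Y B) C)
        (vM sv B (act ac Y B) C ∘ tensm V (idm (ehom H (act ac Y B) C)) (eta_unit n Y B)))
        as [k [Hk _]].
      destruct (Ht Y B C k Hk) as [k' [E1 E2]]. exists k, k'. split; [|split]; auto.
      rewrite Hk, Key by exact LA. reflexivity. }
    assert (Mono : forall C' (w1 w2 : hom (act ac X (act ac Y B)) C'),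
              w1 ∘ aa sa X Y B = w2 ∘ aa sa X Y B -> w1 = w2).
    { intros C' w1 w2 Ew. destruct (Kex C') as [k [k' [E1 [E2 Hk]]]].
      destruct (ev_univ V cl Y (ehom H B C') X (ph (w1 ∘ aa sa X Y B))) as [g [_ Hu]].
      assert (G1 : k ∘ ph w1 = g) by (apply Hu; rewrite K1 by assumption; rewrite ps_ph; reflexivity).
      assert (G2 : k ∘ ph w2 = g) by (apply Hu; rewrite K1 by assumption; rewrite ps_ph, Ew; reflexivity).
      apply ph_inj. rewrite <- (idl (ph w1)), <- (idl (ph w2)), <- E1, <- !assoc, G1, G2.
      reflexivity. }
    destruct (Kex (act ac (tens V X Y) B)) as [k [k' [E1 [E2 Hk]]]].
    destruct (ev_univ V cl Y (ehom H B (act ac (tens V X Y) B)) X (ph (idm _))) as [u [Hu _]].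
    assert (Hb : ps (k' ∘ u) ∘ aa sa X Y B = idm _).
    { apply ph_inj. rewrite <- (K1 LA cl Y B _ k Hk X (k' ∘ u)). rewrite assoc, E2, idl. exact Hu. }
    exists (ps (k' ∘ u)). split; [exact Hb|].
    apply Mono. rewrite <- assoc, Hb, idr, idl. reflexivity.
Qed.

End Core.

From Stdlib Require Import FunctionalExtensionality ProofIrrelevance.

Lemma sact_eq {V : SkewMonCat} {A : Cat} {ac : ActFun V A} (s1 s2 : SkewActegory ac) :
  (forall X Y B, aa s1 X Y B = aa s2 X Y B) -> (forall B, al s1 B = al s2 B) -> s1 = s2.
Proof.
  destruct s1 as [[a1 l1] p1], s2 as [[a2 l2] p2]; simpl; intros Ea El.
  assert (a1 = a2).
  { apply functional_extensionality_dep; intro X. apply functional_extensionality_dep; intro Y.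
    apply functional_extensionality_dep; intro B. apply Ea. }
  assert (l1 = l2).
  { apply functional_extensionality_dep; intro B. apply El. }
  subst. f_equal. apply proof_irrelevance.
Qed.

Lemma svcat_eq {V : SkewMonCat} {A : Cat} {H : HomFun V A} (s1 s2 : SkewVCat H) :
  (forall B C D, vM s1 B C D = vM s2 B C D) -> (forall B, vj s1 B = vj s2 B) -> s1 = s2.
Proof.
  destruct s1 as [[a1 l1] p1], s2 as [[a2 l2] p2]; simpl; intros Ea El.
  assert (a1 = a2).
  { apply functional_extensionality_dep; intro X. apply functional_extensionality_dep; intro Y.
    apply functional_extensionality_dep; intro B. apply Ea. }
  assert (l1 = l2).
  { apply functional_extensionality_dep; intro B. apply El. }
  subst. f_equal. apply proof_irrelevance.
Qed.

Definition FF {V : SkewMonCat} {A : Cat} {ac : ActFun V A} {H : HomFun V A}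
  (n : NatHomIso ac H) (s : SkewActegory ac) : SkewVCat H :=
  {| svdata := Fdata V A ac H n s;
     svlaws := F_laws V A ac H n s (Fdata V A ac H n s) (RF V A ac H n s (salaws _ _ _ s))
                 (fun B => eq_refl) (salaws _ _ _ s) |}.

Definition GG {V : SkewMonCat} {A : Cat} {ac : ActFun V A} {H : HomFun V A}
  (n : NatHomIso ac H) (t : SkewVCat H) : SkewActegory ac :=
  {| sadata := Gdata V A ac H n t;
     salaws := G_laws V A ac H n (Gdata V A ac H n t) t (RG V A ac H n t (svlaws _ _ _ t))
                 (fun B => eq_sym (phi_phi_inv _ _ _ _ n _ _ _ _)) (svlaws _ _ _ t) |}.

Lemma GF {V : SkewMonCat} {A : Cat} {ac : ActFun V A} {H : HomFun V A}
  (n : NatHomIso ac H) (s : SkewActegory ac) : GG n (FF n s) = s.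
Proof.
  apply sact_eq; intros; simpl.
  - rewrite <- (Ha V A ac H n s (Fdata V A ac H n s) (RF V A ac H n s (salaws _ _ _ s))).
    apply phi_inv_phi.
  - apply phi_inv_phi.
Qed.

Lemma FG {V : SkewMonCat} {A : Cat} {ac : ActFun V A} {H : HomFun V A}
  (n : NatHomIso ac H) (t : SkewVCat H) : FF n (GG n t) = t.
Proof.
  apply svcat_eq; intros; simpl.
  - symmetry. exact (HM V A ac H n (Gdata V A ac H n t) t (RG V A ac H n t (svlaws _ _ _ t)) B C D).
  - apply phi_phi_inv.
Qed.

Theorem mainTheorem6 (V : SkewMonCat) (A : Cat) (ac : ActFun V A) (H : HomFun V A)
  (n : NatHomIso ac H) :
  (exists (F : SkewActegory ac -> SkewVCat H) (G : SkewVCat H -> SkewActegory ac),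
      (forall s, G (F s) = s) /\ (forall t, F (G t) = t)) /\
  (is_monoidal V -> forall cl : ClosedStr V,
    exists (F : {s : SkewActegory ac | is_actegory s} -> {t : SkewVCat H | is_tensored n cl t})
           (G : {t : SkewVCat H | is_tensored n cl t} -> {s : SkewActegory ac | is_actegory s}),
      (forall s, G (F s) = s) /\ (forall t, F (G t) = t)).
Proof.
  split.
  - exists (FF n), (GG n). split; [apply GF | apply FG].
  - intros _ cl.
    assert (PF : forall s : SkewActegory ac, is_actegory s -> is_tensored n cl (FF n s)).
    { intros s [Ha1 Hl1]. split.
      - unfold is_normal. apply (proj1 (normal_iff V A ac H n s (FF n s) (fun B => eq_refl))). exact Hl1.
      - apply (proj1 (tens_iff V A ac H n s (FF n s) (RF V A ac H n s (salaws _ _ _ s)) (salaws _ _ _ s) cl)).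
        exact Ha1. }
    assert (PG : forall t : SkewVCat H, is_tensored n cl t -> is_actegory (GG n t)).
    { intros t [Hn Ht].
      pose proof (RG V A ac H n t (svlaws _ _ _ t)) as R.
      pose proof (G_laws V A ac H n (Gdata V A ac H n t) t R
                 (fun B => eq_sym (phi_phi_inv _ _ _ _ n _ _ _ _)) (svlaws _ _ _ t)) as LA.
      split.
      - apply (proj2 (tens_iff V A ac H n (GG n t) t R LA cl)). exact Ht.
      - apply (proj2 (normal_iff V A ac H n (GG n t) t (fun B => eq_sym (phi_phi_inv _ _ _ _ n _ _ _ _)))).
        exact Hn. }
    exists (fun p => exist _ (FF n (proj1_sig p)) (PF _ (proj2_sig p))).
    exists (fun p => exist _ (GG n (proj1_sig p)) (PG _ (proj2_sig p))).
    split.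
    + intros [s p]. simpl. apply eq_sig_hprop; [intros; apply proof_irrelevance|]. simpl. apply GF.
    + intros [t p]. simpl. apply eq_sig_hprop; [intros; apply proof_irrelevance|]. simpl. apply FG.
Qed.
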